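(* Let $(Y,d_Y)$ and $(X,d_X)$ be proper geodesic metric spaces, $a>0$, $b\ge0$, $\lambda\ge1$, $C\ge0$, and let $f:Y\to X$ be a continuous map such that (i) $d_X(f(y),f(y'))\ge a\,d_Y(y,y')-b$ for all $y,y'\in Y$; (ii) for every $y,y'\in Y$ and every geodesic segment $[y,y']$, the path $f([y,y'])$ is rectifiable and $\operatorname{Length}(f([y,y']))\le\lambda\,d_X(f(y),f(y'))+C$. If $(X,d_X)$ is $\delta$-hyperbolic, then $(Y,d_Y)$ is $\delta''$-hyperbolic with $$\delta''=\frac4a\Big((6\lambda^2+14\lambda+5)\delta+\frac{4\lambda+3}{6\lambda+2}C+b\Big)\le\frac4a\big((6\lambda^2+14\lambda+5)\delta+C+b\big).$$
   Context: A metric space is $\delta$-hyperbolic if it is proper, geodesic, and every geodesic triangle is $\delta$-thin: for a geodesic triangle $\Delta=[x,y,z]$ let $T_\Delta$ be the metric tripod with branch lengths $\alpha,\beta,\gamma\ge0$ determined by $d(x,y)=\alpha+\beta$, $d(x,z)=\alpha+\gamma$, $d(y,z)=\beta+\gamma$, and $f_\Delta:\Delta\to T_\Delta$ the map which is an isometry on each side; $\Delta$ is $\delta$-thin if any two points with the same image under $f_\Delta$ are at distance $\le\delta$. *)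

(* Defs.v *)
From Stdlib Require Import Reals List.
From Coquelicot Require Import Coquelicot.
Open Scope R_scope.

Section Metric.
Context {X : Type} (d : X -> X -> R).

Definition is_metric : Prop :=
  (forall x y, 0 <= d x y) /\
  (forall x y, d x y = 0 <-> x = y) /\
  (forall x y, d x y = d y x) /\
  (forall x y z, d x z <= d x y + d y z).

Definition m_open (U : X -> Prop) : Prop :=
  forall x, U x -> exists r, 0 < r /\ forall y, d x y < r -> U y.

Definition m_compact (K : X -> Prop) : Prop :=
  forall (I : Type) (U : I -> X -> Prop),
    (forall i, m_open (U i)) ->
    (forall x, K x -> exists i, U i x) ->
    exists l : list I, forall x, K x -> exists i, In i l /\ U i x.

Definition proper_space : Prop :=
  forall x r, m_compact (fun y => d x y <= r).

(* g : [0, d x y] -> X is a geodesic segment from x to y (unit-speed isometric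
   parametrization; values outside [0, d x y] are irrelevant) *)
Definition geodesic (x y : X) (g : R -> X) : Prop :=
  g 0 = x /\ g (d x y) = y /\
  forall s t, 0 <= s <= d x y -> 0 <= t <= d x y -> d (g s) (g t) = Rabs (s - t).

Definition geodesic_space : Prop :=
  forall x y, exists g, geodesic x y g.

(* Tripod: points are (branch index, distance from center), with all branches
   glued at distance 0. Branch 0 <-> vertex x, 1 <-> y, 2 <-> z. *)
Definition tripod_eq (p q : nat * R) : Prop :=
  snd p = snd q /\ (fst p = fst q \/ snd p = 0).

(* image in the tripod of the point at distance t from the start vertex of a
   side going from vertex iu (branch length lu) to vertex iv *)
Definition tripod_image (iu iv : nat) (lu t : R) : nat * R :=
  if Rle_dec t lu then (iu, lu - t) else (iv, t - lu).

Section Triangle.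
Variables (x y z : X) (gxy gxz gyz : R -> X).

Definition br_x := (d x y + d x z - d y z) / 2.
Definition br_y := (d x y + d y z - d x z) / 2.

(* sides: 0 = [x,y], 1 = [x,z], 2 = [y,z] *)
Definition side_len (k : nat) : R :=
  match k with 0%nat => d x y | 1%nat => d x z | _ => d y z end.
Definition side_pt (k : nat) (t : R) : X :=
  match k with 0%nat => gxy t | 1%nat => gxz t | _ => gyz t end.
Definition side_img (k : nat) (t : R) : nat * R :=
  match k with
  | 0%nat => tripod_image 0 1 br_x t
  | 1%nat => tripod_image 0 2 br_x t
  | _ => tripod_image 1 2 br_y t
  end.

(* the geodesic triangle is delta-thin: points with the same image under
   f_Delta are at distance <= delta *)
Definition thin_triangle (delta : R) : Prop :=
  forall k1 k2 t1 t2, (k1 <= 2)%nat -> (k2 <= 2)%nat ->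
    0 <= t1 <= side_len k1 -> 0 <= t2 <= side_len k2 ->
    tripod_eq (side_img k1 t1) (side_img k2 t2) ->
    d (side_pt k1 t1) (side_pt k2 t2) <= delta.
End Triangle.

Definition hyperbolic (delta : R) : Prop :=
  proper_space /\ geodesic_space /\
  forall x y z gxy gxz gyz,
    geodesic x y gxy -> geodesic x z gxz -> geodesic y z gyz ->
    thin_triangle x y z gxy gxz gyz delta.

Fixpoint psum (p : R -> X) (t : nat -> R) (n : nat) : R :=
  match n with
  | O => 0
  | S m => psum p t m + d (p (t m)) (p (t (S m)))
  end.

Definition partition (a b : R) (t : nat -> R) (n : nat) : Prop :=
  t O = a /\ t n = b /\ forall i, (i < n)%nat -> t i <= t (S i).

Definition rectifiable (p : R -> X) (a b : R) : Prop :=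
  exists M, forall t n, partition a b t n -> psum p t n <= M.

Definition path_length (p : R -> X) (a b : R) : R :=
  real (Lub_Rbar (fun s => exists t n, partition a b t n /\ s = psum p t n)).
End Metric.

Definition m_continuous {Y X : Type} (dY : Y -> Y -> R) (dX : X -> X -> R)
  (f : Y -> X) : Prop :=
  forall y eps, 0 < eps -> exists eta, 0 < eta /\
    forall y', dY y y' < eta -> dX (f y) (f y') < eps.

(* Main.v *)
Require Import Defs.
From Stdlib Require Import Arith ZArith Reals Lia Psatz Lra Classical.
From Coquelicot Require Import Coquelicot.
Open Scope R_scope.

Section Basics.
Context {X : Type} (d : X -> X -> R) (Hm : is_metric d).

Lemma d_nonneg x y : 0 <= d x y.
Proof. destruct Hm as [H _]; auto. Qed.
Lemma d_refl x : d x x = 0.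
Proof. destruct Hm as [_ [H _]]; apply H; auto. Qed.
Lemma d_sym x y : d x y = d y x.
Proof. destruct Hm as [_ [_ [H _]]]; auto. Qed.
Lemma d_tri x y z : d x z <= d x y + d y z.
Proof. destruct Hm as [_ [_ [_ H]]]; auto. Qed.

Lemma geo_start x y g : geodesic d x y g -> forall s, 0 <= s <= d x y -> d x (g s) = s.
Proof.
  intros [H0 [H1 H2]] s Hs. rewrite <- H0.
  rewrite H2; [|pose proof (d_nonneg x y); lra|lra].
  rewrite Rabs_left1; lra.
Qed.

Lemma geo_end x y g : geodesic d x y g -> forall s, 0 <= s <= d x y -> d (g s) y = d x y - s.
Proof.
  intros [H0 [H1 H2]] s Hs. rewrite <- H1 at 1.
  rewrite H2; [|lra|pose proof (d_nonneg x y); lra].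
  rewrite Rabs_left1; lra.
Qed.

Lemma geo_dist x y g : geodesic d x y g -> forall s t, 0 <= s <= d x y -> 0 <= t <= d x y ->
  d (g s) (g t) = Rabs (s - t).
Proof. intros [_ [_ H]]; auto. Qed.

Definition grev (g : R -> X) (D : R) := fun s => g (D - s).

Lemma geo_rev x y g : geodesic d x y g -> geodesic d y x (grev g (d x y)).
Proof.
  intros [H0 [H1 H2]]. unfold geodesic, grev. rewrite (d_sym y x). split; [|split].
  - replace (d x y - 0) with (d x y) by ring. auto.
  - replace (d x y - d x y) with 0 by ring. auto.
  - intros s t Hs Ht. rewrite H2 by lra. rewrite Rabs_minus_sym. f_equal. ring.
Qed.

Lemma geo_sub x y g s0 s1 : geodesic d x y g -> 0 <= s0 -> s0 <= s1 -> s1 <= d x y ->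
  d (g s0) (g s1) = s1 - s0 /\ geodesic d (g s0) (g s1) (fun s => g (s0 + s)).
Proof.
  intros Hg H0 H01 H1. pose proof Hg as [G0 [G1 G2]].
  assert (E: d (g s0) (g s1) = s1 - s0).
  { rewrite G2 by lra. rewrite Rabs_left1; lra. }
  split; auto. split; [|split].
  - f_equal; ring.
  - rewrite E. f_equal; ring.
  - intros s t Hs Ht. rewrite E in Hs, Ht. rewrite G2 by lra. f_equal; ring.
Qed.

End Basics.

Lemma my_ivt (phi : R -> R) (a b y : R) : a <= b ->
  (forall x, a <= x <= b -> forall eps, 0 < eps -> exists eta, 0 < eta /\
     forall x', a <= x' <= b -> Rabs (x - x') < eta -> Rabs (phi x - phi x') < eps) ->
  phi a <= y -> y <= phi b -> exists x, a <= x <= b /\ phi x = y.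
Proof.
  intros Hab Hc Ha Hb.
  set (E := fun x => a <= x <= b /\ phi x <= y).
  assert (HB : bound E). { exists b. intros x [Hx _]. lra. }
  assert (HE : exists x, E x). { exists a. split; [lra|auto]. }
  destruct (completeness E HB HE) as [s [Hub Hlub]].
  assert (Has : a <= s). { apply Hub. split; [lra|auto]. }
  assert (Hsb : s <= b). { apply Hlub. intros x [Hx _]. lra. }
  exists s. split; [lra|].
  destruct (Rtotal_order (phi s) y) as [Hlt|[Heq|Hgt]]; auto.
  - exfalso. destruct (Rle_lt_or_eq_dec s b Hsb) as [Hs|Hs].
    2:{ subst s. lra. }
    destruct (Hc s (conj Has Hsb) (y - phi s)) as [eta [Heta Hh]]; [lra|].
    set (x' := Rmin b (s + eta/2)).
    assert (Hx' : s < x' <= b).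
    { unfold x'. apply Rmin_case_strong; intros; lra. }
    assert (Ex : E x').
    { split; [lra|]. assert (Rabs (s - x') < eta).
      { rewrite Rabs_left1 by lra. unfold x' in *. revert Hx'.
        apply Rmin_case_strong; intros; lra. }
      specialize (Hh x' ltac:(lra) H). apply Rabs_def2 in Hh. lra. }
    specialize (Hub x' Ex). lra.
  - exfalso. destruct (Rle_lt_or_eq_dec a s Has) as [Hs|Hs].
    2:{ subst s. lra. }
    destruct (Hc s (conj Has Hsb) (phi s - y)) as [eta [Heta Hh]]; [lra|].
    assert (Hup : is_upper_bound E (Rmax a (s - eta/2))).
    { intros x Ex. destruct (Rle_or_lt x (Rmax a (s - eta/2))) as [Hx|Hx]; auto.
      exfalso. destruct Ex as [Hx1 Hx2].
      assert (x <= s) by (apply Hub; split; auto).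
      assert (s - eta/2 < x) by (revert Hx; apply Rmax_case_strong; intros; lra).
      specialize (Hh x ltac:(lra)). assert (Rabs (s - x) < eta).
      { rewrite Rabs_right by lra. lra. }
      specialize (Hh H1). apply Rabs_def2 in Hh. lra. }
    specialize (Hlub _ Hup). revert Hlub. apply Rmax_case_strong; intros; lra.
Qed.

Lemma psum_le_length {X} (d : X -> X -> R) p a b t n :
  rectifiable d p a b -> partition a b t n -> psum d p t n <= path_length d p a b.
Proof.
  intros [M HM] Hp. unfold path_length.
  set (E := fun s => exists t n, partition a b t n /\ s = psum d p t n).
  destruct (Lub_Rbar_correct E) as [Hub Hlub].
  assert (H1 : Rbar_le (psum d p t n) (Lub_Rbar E)). { apply Hub. exists t, n; auto. }
  assert (H2 : Rbar_le (Lub_Rbar E) M).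
  { apply Hlub. intros x [t' [n' [Hp' ->]]]. simpl. apply HM; auto. }
  destruct (Lub_Rbar E); simpl in *; auto; contradiction.
Qed.

Lemma partition_bounds a b t n : partition a b t n -> forall i, (i <= n)%nat -> a <= t i <= b.
Proof.
  intros [H0 [Hn Hm]].
  assert (L : forall i, (i <= n)%nat -> a <= t i).
  { induction i; intros Hi. rewrite H0; lra. specialize (Hm i ltac:(lia)). specialize (IHi ltac:(lia)). lra. }
  assert (U : forall k i, (i + k = n)%nat -> t i <= b).
  { induction k; intros i Hi. replace i with n by lia. rewrite Hn; lra.
    specialize (IHk (S i) ltac:(lia)). specialize (Hm i ltac:(lia)). lra. }
  intros i Hi. split; auto. apply (U (n - i)%nat); lia.
Qed.

Lemma psum_ext {X} (d : X -> X -> R) p q t u n :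
  (forall i, (i <= n)%nat -> p (t i) = q (u i)) -> psum d p t n = psum d q u n.
Proof.
  induction n; intros H; simpl; auto.
  rewrite IHn by (intros; apply H; lia). rewrite (H n), (H (S n)) by lia. auto.
Qed.

Definition cons_seq (s : R) (t : nat -> R) : nat -> R :=
  fun i => match i with O => s | S j => t j end.

Lemma psum_cons {X} (d : X -> X -> R) p s t n :
  psum d p (cons_seq s t) (S n) = d (p s) (p (t O)) + psum d p t n.
Proof.
  induction n; simpl in *. ring. rewrite IHn. ring.
Qed.

Lemma partition_cons s a b t n : s <= a -> partition a b t n -> partition s b (cons_seq s t) (S n).
Proof.
  intros Hs [H0 [Hn Hm]]. split; [|split]; simpl; auto.
  intros i Hi. destruct i; simpl. rewrite H0; auto. apply Hm; lia.
Qed.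

Lemma psum_nonneg {X} (d : X -> X -> R) (Hm : is_metric d) p t n : 0 <= psum d p t n.
Proof.
  destruct Hm as [Hn _]. induction n; simpl. lra. specialize (Hn (p (t n)) (p (t (S n)))). lra.
Qed.

Definition seq2 (a b : R) : nat -> R := fun i => match i with O => a | _ => b end.
Lemma partition_seq2 a b : a <= b -> partition a b (seq2 a b) 1.
Proof. intros H. split; [|split]; simpl; auto. intros i Hi. destruct i; simpl; try lia; lra. Qed.
Lemma psum_seq2 {X} (d : X -> X -> R) p a b : psum d p (seq2 a b) 1 = d (p a) (p b).
Proof. simpl. ring. Qed.

Section CI.
Context {Y X : Type} (dY : Y -> Y -> R) (dX : X -> X -> R) (HmY : is_metric dY)
  (f : Y -> X) (lam C : R)
  (Hii : forall y y' (g : R -> Y), geodesic dY y y' g ->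
     rectifiable dX (fun t => f (g t)) 0 (dY y y') /\
     path_length dX (fun t => f (g t)) 0 (dY y y') <= lam * dX (f y) (f y') + C).

Lemma chain_ineq y y' g s r tau n : geodesic dY y y' g -> 0 <= s -> s <= r -> r <= dY y y' ->
  partition s r tau n -> psum dX (fun t => f (g t)) tau n <= lam * dX (f (g s)) (f (g r)) + C.
Proof.
  intros Hg Hs Hsr Hr Hp.
  destruct (geo_sub dY y y' g s r Hg Hs Hsr Hr) as [E Hg'].
  destruct (Hii _ _ _ Hg') as [Hrect Hlen]. rewrite E in Hrect, Hlen.
  assert (Hp' : partition 0 (r - s) (fun i => tau i - s) n).
  { destruct Hp as [H0 [Hn Hm]]. split; [|split]. rewrite H0; ring. rewrite Hn; ring.
    intros i Hi. specialize (Hm i Hi). lra. }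
  rewrite (psum_ext dX (fun t => f (g t)) (fun t => f (g (s + t))) tau (fun i => tau i - s)).
  - eapply Rle_trans. apply psum_le_length; eauto. auto.
  - intros i Hi. f_equal. f_equal. ring.
Qed.
End CI.

Section XGeo.
Context {X : Type} (d : X -> X -> R) (Hm : is_metric d) (delta : R)
  (Hthin : forall x y z gxy gxz gyz, geodesic d x y gxy -> geodesic d x z gxz ->
     geodesic d y z gyz -> thin_triangle d x y z gxy gxz gyz delta)
  (Hgeo : geodesic_space d).

Lemma slim x y z gxy gxz gyz : geodesic d x y gxy -> geodesic d x z gxz -> geodesic d y z gyz ->
  forall t, 0 <= t <= d x y -> exists p,
   ((exists s, 0 <= s <= d x z /\ p = gxz s) \/ (exists s, 0 <= s <= d y z /\ p = gyz s)) /\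
   d (gxy t) p <= delta.
Proof.
  intros H1 H2 H3 t Ht. pose proof (Hthin _ _ _ _ _ _ H1 H2 H3) as T.
  pose proof (d_tri d Hm x y z). pose proof (d_tri d Hm y x z). pose proof (d_tri d Hm x z y).
  rewrite (d_sym d Hm y x) in *. rewrite (d_sym d Hm z y) in *.
  destruct (Rle_dec t (br_x d x y z)) as [Hle|Hgt].
  - exists (gxz t). split. left. exists t. split; auto. unfold br_x in Hle. lra.
    apply (T 0%nat 1%nat t t); simpl; try lia; try lra.
    unfold br_x in Hle; lra.
    unfold tripod_image. destruct (Rle_dec t (br_x d x y z)); [|contradiction].
    split; auto.
  - exists (gyz (d x y - t)). split. right. exists (d x y - t). split; auto.
    unfold br_x in Hgt. lra.
    apply (T 0%nat 2%nat t (d x y - t)); simpl; try lia; try lra.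
    unfold br_x in Hgt; lra.
    unfold tripod_image. destruct (Rle_dec t (br_x d x y z)); [contradiction|].
    destruct (Rle_dec (d x y - t) (br_y d x y z)) as [Hq|Hq].
    + unfold tripod_eq; simpl. split; auto. unfold br_x, br_y. lra.
    + exfalso. apply Hq. unfold br_x, br_y in *. lra.
Qed.

Lemma center x y z gxy gxz gyz : geodesic d x y gxy -> geodesic d x z gxz -> geodesic d y z gyz ->
  d (gxy (br_x d x y z)) (gxz (br_x d x y z)) <= delta /\
  d (gxy (br_x d x y z)) (gyz (br_y d x y z)) <= delta.
Proof.
  intros H1 H2 H3. pose proof (Hthin _ _ _ _ _ _ H1 H2 H3) as T.
  pose proof (d_tri d Hm x y z). pose proof (d_tri d Hm y x z). pose proof (d_tri d Hm x z y).
  rewrite (d_sym d Hm y x) in *. rewrite (d_sym d Hm z y) in *.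
  split.
  - apply (T 0%nat 1%nat); simpl; try lia; try (unfold br_x; lra).
    unfold tripod_image. destruct (Rle_dec _ _) as [_|N]; [|exfalso; apply N; lra].
    split; auto.
  - apply (T 0%nat 2%nat); simpl; try lia; try (unfold br_x, br_y; lra).
    unfold tripod_image. destruct (Rle_dec (br_x d x y z) _) as [_|N]; [|exfalso; apply N; lra].
    destruct (Rle_dec (br_y d x y z) _) as [_|N]; [|exfalso; apply N; lra].
    unfold tripod_eq; simpl. split. ring. right. ring.
Qed.

Lemma logchain : 0 <= delta -> forall k (x : nat -> X) N g, (N <= 2 ^ k)%nat -> 0 <= g ->
  (forall i, (i < N)%nat -> d (x i) (x (S i)) <= g) ->
  forall gg, geodesic d (x O) (x N) gg -> forall s, 0 <= s <= d (x O) (x N) ->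
  exists i, (i <= N)%nat /\ d (gg s) (x i) <= INR k * delta + g / 2.
Proof.
  intros Hd. induction k; intros x N g HN Hg Hgap gg Hgg s Hs.
  - simpl in HN. destruct N as [|[|N]]; try lia.
    + exists O. split; auto. rewrite d_refl in Hs by auto.
      replace s with 0 by lra. destruct Hgg as [G0 _]. rewrite G0, d_refl by auto. simpl. lra.
    + specialize (Hgap O ltac:(lia)).
      pose proof (geo_start d Hm _ _ _ Hgg s Hs). pose proof (geo_end d Hm _ _ _ Hgg s Hs).
      destruct (Rle_dec s (d (x O) (x 1%nat) / 2)).
      * exists O. split; [lia|]. rewrite d_sym by auto. simpl. lra.
      * exists 1%nat. split; [lia|]. simpl. lra.
  - destruct (le_lt_dec N (2 ^ k)) as [HN'|HN'].
    + destruct (IHk x N g HN' Hg Hgap gg Hgg s Hs) as [i [Hi Hd']].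
      exists i. split; auto. rewrite S_INR. nra.
    + set (j := (2 ^ k)%nat) in *.
      assert (HNj : (N - j <= 2 ^ k)%nat). { simpl in HN. unfold j. lia. }
      destruct (Hgeo (x O) (x j)) as [g1 Hg1].
      destruct (Hgeo (x N) (x j)) as [g2 Hg2].
      destruct (slim _ _ _ _ _ _ Hgg Hg1 Hg2 s Hs) as [p [[[s' [Hs' ->]]|[s' [Hs' ->]]] Hp]].
      * destruct (IHk x j g (le_n _) Hg ltac:(intros ii Hii; apply Hgap; unfold j in *; lia) g1 Hg1 s' Hs')
          as [i [Hi Hd']].
        exists i. split; [lia|]. rewrite S_INR.
        pose proof (d_tri d Hm (gg s) (g1 s') (x i)). lra.
      * set (x' := fun i => x (j + i)%nat).
        assert (Hx0 : x' O = x j) by (unfold x'; f_equal; lia).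
        assert (HxN : x' (N - j)%nat = x N) by (unfold x'; f_equal; lia).
        pose proof (geo_rev d Hm _ _ _ Hg2) as Hr.
        rewrite <- Hx0, <- HxN in Hr.
        assert (Hs'' : 0 <= d (x N) (x j) - s' <= d (x' O) (x' (N - j)%nat)).
        { rewrite Hx0, HxN, (d_sym d Hm (x j)). lra. }
        destruct (IHk x' (N - j)%nat g HNj Hg ltac:(intros i Hi; unfold x';
             replace (j + S i)%nat with (S (j + i)) by lia; apply Hgap; lia) _ Hr _ Hs'')
          as [i [Hi Hd']].
        exists (j + i)%nat. split; [lia|]. rewrite S_INR.
        unfold grev in Hd'. rewrite ?Hx0, ?HxN in Hd'. replace (d (x N) (x j) - (d (x N) (x j) - s')) with s' in Hd' by ring.
        unfold x' in Hd'.
        pose proof (d_tri d Hm (gg s) (g2 s') (x (j + i)%nat)). lra.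
Qed.

End XGeo.

Section Select.
Context {X : Type} (d : X -> X -> R) (Hm : is_metric d) (c : R -> X) (lo hi : R)
  (Hc : forall s, lo <= s <= hi -> forall eps, 0 < eps -> exists eta, 0 < eta /\
        forall s', lo <= s' <= hi -> Rabs (s - s') < eta -> d (c s) (c s') < eps).

Lemma d_rev_tri p x y : Rabs (d p x - d p y) <= d x y.
Proof.
  pose proof (d_tri d Hm p x y). pose proof (d_tri d Hm p y x). rewrite (d_sym d Hm y x) in *.
  apply Rabs_le. lra.
Qed.

Lemma select (eta : R) : 0 < eta -> forall K s W, lo <= s <= hi ->
  (forall tau n, partition s hi tau n -> psum d c tau n <= W) -> W < INR K * eta ->
  exists tau n, partition s hi tau n /\
    (forall i, (i < n)%nat -> d (c (tau i)) (c (tau (S i))) <= eta) /\ (n <= K)%nat.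
Proof.
  intros Heta. induction K; intros s W Hs HW HK.
  - exfalso. specialize (HW _ _ (partition_seq2 s hi ltac:(lra))).
    pose proof (psum_nonneg d Hm c (seq2 s hi) 1). simpl in HK. lra.
  - destruct (classic (exists s', s <= s' <= hi /\ eta < d (c s) (c s'))) as [[s' [Hs' Hd]]|Hno].
    + destruct (my_ivt (fun x => d (c s) (c x)) s s' eta ltac:(lra)) as [s1 [Hs1 E1]].
      * intros x Hx eps Heps. destruct (Hc x ltac:(lra) eps Heps) as [e [He Hh]].
        exists e. split; auto. intros x' Hx' Hxx. specialize (Hh x' ltac:(lra) Hxx).
        pose proof (d_rev_tri (c s) (c x) (c x')). lra.
      * simpl. rewrite d_refl by auto. lra.
      * simpl. lra.
      * simpl in E1.
        destruct (IHK s1 (W - eta) ltac:(lra)) as [tau [n [Hp [Hg Hn]]]].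
        { intros tau n Hp. pose proof (HW _ _ (partition_cons s s1 hi tau n ltac:(lra) Hp)) as H.
          rewrite psum_cons in H. destruct Hp as [H0 _]. rewrite H0 in H. lra. }
        { rewrite S_INR in HK. lra. }
        exists (cons_seq s tau), (S n). split; [apply (partition_cons s s1 hi); auto; lra|]. split; [|lia].
        intros i Hi. destruct i; simpl.
        -- destruct Hp as [H0 _]. rewrite H0, E1. lra.
        -- apply Hg; lia.
    + exists (seq2 s hi), 1%nat. split; [apply partition_seq2; lra|]. split; [|lia].
      intros i Hi. destruct i; [|lia]. simpl.
      destruct (Rle_or_lt (d (c s) (c hi)) eta) as [H|H]; auto.
      exfalso. apply Hno. exists hi. split; [lra|auto].
Qed.
End Select.

Lemma pow2_ge_succ n : INR n + 1 <= 2 ^ n.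
Proof. induction n as [|n IH]. - simpl. lra. - rewrite S_INR. simpl pow. pose proof (pos_INR n). lra. Qed.

Lemma pow2_pos n : 0 < 2 ^ n.
Proof. apply pow_lt; lra. Qed.

Lemma pow2_between_aux : forall N x, 1 <= x -> x <= 2 ^ N -> exists k, x <= 2 ^ k <= 2 * x.
Proof.
  induction N; intros x H1 H2.
  - exists O. simpl in *. lra.
  - destruct (Rle_or_lt x (2 ^ N)) as [H|H]. apply IHN; auto.
    exists (S N). simpl in *. lra.
Qed.

Lemma pow2_between x : 1 <= x -> exists k, x <= 2 ^ k <= 2 * x.
Proof.
  intros H. destruct (archimed x) as [Hu _].
  assert (exists N, x <= INR N) as [N HN].
  { exists (Z.to_nat (up x)). rewrite INR_IZR_INZ, Z2Nat.id. lra.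
    apply le_IZR. simpl. lra. }
  apply (pow2_between_aux N); auto. pose proof (pow2_ge_succ N). lra.
Qed.

Lemma k_small k : 4 * INR k <= 2 ^ k + 4.
Proof.
  destruct k as [|[|k]]; [simpl; lra|simpl; lra|].
  pose proof (pow2_ge_succ k). rewrite !S_INR. simpl pow. pose proof (pos_INR k). lra.
Qed.

Lemma key_ineq lam P k : 1 <= lam -> 4*lam+2 <= P -> P <= 8*lam+4 -> 0 <= k -> k <= P/4 + 1 ->
  (6*lam + 3/2) * ((P - 1) - lam) >= (P - 1) * (2 + k) + 4 * lam.
Proof.
  intros H1 H2 H3 H4 H5.
  assert (A: (P-1)*(2+k) <= (P-1)*(3 + P/4)) by (apply Rmult_le_compat_l; lra).
  nra.
Qed.

Lemma k_exists lam : 1 <= lam -> exists k : nat,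
  4*lam+2 <= 2 ^ k /\ 2 ^ k <= 8*lam+4 /\ INR k <= 2 ^ k / 4 + 1.
Proof.
  intros H. destruct (pow2_between (4*lam+2) ltac:(lra)) as [k Hk].
  exists k. pose proof (k_small k). repeat split; lra.
Qed.

Section Claim1.
Context {X : Type} (d : X -> X -> R) (Hm : is_metric d) (delta : R)
  (Hthin : forall x y z gxy gxz gyz, geodesic d x y gxy -> geodesic d x z gxz ->
     geodesic d y z gyz -> thin_triangle d x y z gxy gxz gyz delta)
  (Hgeo : geodesic_space d) (Hd0 : 0 <= delta) (lam C : R) (Hlam : 1 <= lam) (HC : 0 <= C)
  (c : R -> X) (s0 s1 : R) (Hs01 : s0 <= s1)
  (Hc : forall s, s0 <= s <= s1 -> forall eps, 0 < eps -> exists eta, 0 < eta /\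
        forall s', s0 <= s' <= s1 -> Rabs (s - s') < eta -> d (c s) (c s') < eps)
  (HCI : forall s r, s0 <= s -> s <= r -> r <= s1 -> forall tau n, partition s r tau n ->
        psum d c tau n <= lam * d (c s) (c r) + C).

Lemma near_dir (k : nat) ta tb : 1 < 2 ^ k -> s0 <= ta -> ta <= tb -> tb <= s1 ->
  forall h, geodesic d (c ta) (c tb) h -> forall s', 0 <= s' <= d (c ta) (c tb) ->
  forall eps, 0 < eps -> exists tau, s0 <= tau <= s1 /\
  d (h s') (c tau) <= INR k * delta + (lam * d (c ta) (c tb) + C + eps) / (2 * (2 ^ k - 1)).
Proof.
  intros Hk Hta Hab Htb h Hh s' Hs' eps Heps.
  set (W := lam * d (c ta) (c tb) + C).
  assert (HW0 : 0 <= W). { unfold W. pose proof (d_nonneg d Hm (c ta) (c tb)). nra. }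
  set (eta := (W + eps) / (2 ^ k - 1)).
  assert (Heta : 0 < eta). { unfold eta. apply Rdiv_lt_0_compat; lra. }
  destruct (select d Hm c ta tb
     ltac:(intros s Hs e He; destruct (Hc s ltac:(lra) e He) as [et [Het Hh']];
           exists et; split; auto; intros; apply Hh'; auto; lra)
     eta Heta (2 ^ k) ta W ltac:(lra)
     ltac:(intros tau n Hp; apply HCI; auto)) as [tau [n [Hp [Hgap Hn]]]].
  { rewrite pow_INR. replace (INR 2) with 2 by (simpl; lra). unfold eta.
    apply (Rmult_lt_reg_r (2 ^ k - 1)); [lra|].
    field_simplify; [|lra]. nra. }
  pose proof Hp as [H0 [Hn' _]].
  assert (Hh2 : geodesic d (c (tau O)) (c (tau n)) h) by (rewrite H0, Hn'; auto).
  assert (Hs2 : 0 <= s' <= d (c (tau O)) (c (tau n))) by (rewrite H0, Hn'; auto).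
  destruct (logchain d Hm delta Hthin Hgeo Hd0 k (fun i => c (tau i)) n eta Hn ltac:(lra)
     Hgap h Hh2 s' Hs2) as [i [Hi Hd]].
  exists (tau i). pose proof (partition_bounds _ _ _ _ Hp i Hi). split; [lra|].
  unfold eta in Hd.
  assert (E2 : (W + eps) / (2 * (2 ^ k - 1)) = (W + eps) / (2 ^ k - 1) / 2) by (field; intro; lra).
  unfold W in *. rewrite E2. lra.
Qed.

Lemma near_any (k : nat) ta tb : 1 < 2 ^ k -> s0 <= ta <= s1 -> s0 <= tb <= s1 ->
  forall h, geodesic d (c ta) (c tb) h -> forall s', 0 <= s' <= d (c ta) (c tb) ->
  forall eps, 0 < eps -> exists tau, s0 <= tau <= s1 /\
  d (h s') (c tau) <= INR k * delta + (lam * d (c ta) (c tb) + C + eps) / (2 * (2 ^ k - 1)).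
Proof.
  intros Hk Ha Hb h Hh s' Hs' eps Heps.
  destruct (Rle_or_lt ta tb) as [Hab|Hab].
  - apply near_dir; auto; lra.
  - pose proof (geo_rev d Hm _ _ _ Hh) as Hr.
    destruct (near_dir k tb ta Hk ltac:(lra) ltac:(lra) ltac:(lra) _ Hr (d (c ta) (c tb) - s')
      ltac:(rewrite (d_sym d Hm (c tb)); lra) eps Heps) as [tau [Ht Hd]].
    exists tau. split; auto. unfold grev in Hd.
    replace (d (c ta) (c tb) - (d (c ta) (c tb) - s')) with s' in Hd by ring.
    rewrite (d_sym d Hm (c tb)) in Hd. auto.
Qed.


Definition Bc := (6*lam + 3/2)*delta + C/(6*lam+2).

Lemma Bc_ge : 4 * delta <= Bc.
Proof.
  unfold Bc. assert (0 <= C / (6*lam+2)) by (apply Rdiv_le_0_compat; lra). nra.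
Qed.

Lemma final_alg (k : nat) M e D : 4*lam+2 <= 2 ^ k -> 2 ^ k <= 8*lam+4 -> INR k <= 2 ^ k / 4 + 1 ->
  0 < e -> M - e < (2 + INR k) * delta + (lam * D + C + e) / (2 * (2 ^ k - 1)) + e ->
  D < 2 * M + 2 * e + 2 * (4 * delta + 3 * e) ->
  M <= Bc + (8*lam + 1 + 4*(2 ^ k - 1)) / (2*(2 ^ k - 1) - 2*lam) * e.
Proof.
  intros H1 H2 H3 He HM HD.
  set (P := 2 ^ k) in *. set (S := P - 1).
  assert (HS : 4*lam + 1 <= S) by (unfold S; lra).
  pose proof (key_ineq lam P (INR k) Hlam H1 H2 (pos_INR k) H3) as Hkey. fold S in Hkey.
  set (Q := 2*S - 2*lam).
  assert (HQ : 6*lam+2 <= Q) by (unfold Q; lra).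
  assert (HM2 : 2*S*M < 2*S*(2 + INR k)*delta + lam * D + C + e + 2*S*e + 2*S*e).
  { assert (E: (lam * D + C + e) / (2 * (P - 1)) = (lam * D + C + e) / (2 * S)) by reflexivity.
    rewrite E in HM. apply (Rmult_lt_compat_l (2*S)) in HM; [|lra].
    replace (2 * S * ((2 + INR k) * delta + (lam * D + C + e) / (2 * S) + e)) with
      (2 * S * (2 + INR k) * delta + (lam * D + C + e) + 2*S*e) in HM by (field; lra). lra. }
  assert (HlD : lam * D <= lam * (2 * M + 2 * e + 2 * (4 * delta + 3 * e))) by
    (apply Rmult_le_compat_l; lra).
  assert (HQM : Q * M < 2*S*(2+INR k)*delta + 8*lam*delta + C + (8*lam + 1 + 4*S)*e) by (unfold Q; lra).
  assert (HB1 : 2*S*(2+INR k)*delta + 8*lam*delta <= Q * ((6*lam + 3/2)*delta)).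
  { unfold Q. assert (0 <= delta * ((6 * lam + 3 / 2) * (S - lam) - (S * (2 + INR k) + 4 * lam)))
      by (apply Rmult_le_pos; lra). nra. }
  assert (HB2 : C <= Q * (C / (6*lam+2))).
  { replace (Q * (C / (6 * lam + 2))) with (C * (Q / (6*lam+2))) by (field; lra).
    assert (1 <= Q / (6*lam+2)). { apply (Rmult_le_reg_r (6*lam+2)); [lra|]. field_simplify; lra. }
    nra. }
  assert (HQB : Q * M < Q * Bc + (8*lam + 1 + 4*S)*e) by (unfold Bc; lra).
  fold P. fold S. fold Q.
  apply Rlt_le. apply (Rmult_lt_reg_l Q); [lra|].
  replace (Q * (Bc + (8 * lam + 1 + 4 * S) / Q * e)) with (Q * Bc + (8 * lam + 1 + 4 * S) * e)
    by (field; lra). lra.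
Qed.

Lemma claim1 gam : geodesic d (c s0) (c s1) gam ->
  forall sig, 0 <= sig <= d (c s0) (c s1) -> forall eps, 0 < eps ->
  exists tau, s0 <= tau <= s1 /\ d (gam sig) (c tau) <= Bc + eps.
Proof.
  intros Hg. set (L := d (c s0) (c s1)). assert (HLdef : L = d (c s0) (c s1)) by reflexivity.
  assert (HL : 0 <= L) by apply (d_nonneg d Hm).
  assert (Hst : forall sg, 0 <= sg <= L -> d (gam sg) (c s0) = sg).
  { intros sg Hsg. rewrite (d_sym d Hm). apply (geo_start d Hm _ _ _ Hg); auto. }
  assert (Hen : forall sg, 0 <= sg <= L -> d (gam sg) (c s1) = L - sg).
  { intros sg Hsg. apply (geo_end d Hm _ _ _ Hg); auto. }
  destruct (k_exists lam Hlam) as [k [Hk1 [Hk2 Hk3]]].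
  set (E := fun r => exists sg, 0 <= sg <= L /\ forall tau, s0 <= tau <= s1 -> r <= d (gam sg) (c tau)).
  assert (HB : bound E).
  { exists L. intros r [sg [Hsg Hr]]. specialize (Hr s0 ltac:(lra)). rewrite Hst in Hr; lra. }
  assert (HE : exists r, E r).
  { exists 0. exists 0. split; [lra|]. intros. apply (d_nonneg d Hm). }
  destruct (completeness E HB HE) as [M [Hub Hlub]].
  assert (P1 : forall sg, 0 <= sg <= L -> forall e, 0 < e ->
     exists tau, s0 <= tau <= s1 /\ d (gam sg) (c tau) < M + e).
  { intros sg Hsg e He. apply NNPP. intro N.
    assert (E (M + e)).
    { exists sg. split; auto. intros tau Ht.
      destruct (Rle_or_lt (M + e) (d (gam sg) (c tau))) as [H|H]; auto.
      exfalso. apply N. exists tau. split; auto. }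
    specialize (Hub _ H). lra. }
  set (K0 := 4 + (8*lam + 1 + 4*(2 ^ k - 1)) / (2*(2 ^ k - 1) - 2*lam)).
  assert (HK0 : 4 <= K0).
  { unfold K0. assert (0 <= (8*lam + 1 + 4*(2 ^ k - 1)) / (2*(2 ^ k - 1) - 2*lam))
      by (apply Rdiv_le_0_compat; lra). lra. }
  assert (Main : forall e, 0 < e -> M <= Bc + K0 * e).
  { intros e He.
    assert (P2 : exists sg, 0 <= sg <= L /\ forall tau, s0 <= tau <= s1 -> M - e < d (gam sg) (c tau)).
    { apply NNPP. intro N.
      assert (Hu : is_upper_bound E (M - e)).
      { intros r [sg [Hsg Hr]]. destruct (Rle_or_lt r (M - e)) as [H|H]; auto.
        exfalso. apply N. exists sg. split; auto. intros tau Ht. specialize (Hr tau Ht). lra. }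
      specialize (Hlub _ Hu). lra. }
    destruct P2 as [se [Hse Hfar]].
    pose proof Bc_ge as HBc.
    set (rr := 4 * delta + 3 * e). assert (Hrr : rr = 4 * delta + 3 * e) by reflexivity.
    destruct (Rle_or_lt se rr) as [Hc1|Hc1].
    { specialize (Hfar s0 ltac:(lra)). rewrite Hst in Hfar by auto. unfold rr in *. assert (4*e <= K0*e) by nra. lra. }
    destruct (Rle_or_lt (L - se) rr) as [Hc2|Hc2].
    { specialize (Hfar s1 ltac:(lra)). rewrite Hen in Hfar by auto. unfold rr in *. assert (4*e <= K0*e) by nra. lra. }
    set (e0 := gam se). set (em := gam (se - rr)). set (ep := gam (se + rr)).
    assert (D0m : d e0 em = rr).
    { unfold e0, em. rewrite (geo_dist d _ _ _ Hg) by lra. rewrite Rabs_right; lra. }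
    assert (D0p : d e0 ep = rr).
    { unfold e0, ep. rewrite (geo_dist d _ _ _ Hg) by lra. rewrite Rabs_left1; lra. }
    destruct (P1 (se - rr) ltac:(lra) e He) as [ta [Hta Hda]]. fold em in Hda.
    destruct (P1 (se + rr) ltac:(lra) e He) as [tb [Htb Hdb]]. fold ep in Hdb.
    destruct (geo_sub d _ _ _ (se - rr) (se + rr) Hg ltac:(lra) ltac:(lra) ltac:(lra)) as [Dmp Hg'].
    fold em ep in Dmp, Hg'.
    destruct (Hgeo em (c ta)) as [h1 Hh1].
    destruct (Hgeo ep (c ta)) as [h2 Hh2].
    assert (He0 : gam (se - rr + rr) = e0) by (unfold e0; f_equal; ring).
    destruct (slim d Hm delta Hthin _ _ _ _ _ _ Hg' Hh1 Hh2 rr ltac:(lra)) as [p [[[s [Hs ->]]|[s [Hs ->]]] Hp]];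
      rewrite He0 in Hp.
    -
      exfalso.
      pose proof (geo_start d Hm _ _ _ Hh1 s Hs). pose proof (geo_end d Hm _ _ _ Hh1 s Hs).
      pose proof (d_tri d Hm e0 (h1 s) em). pose proof (d_tri d Hm e0 (h1 s) (c ta)).
      rewrite (d_sym d Hm (h1 s) em) in *. specialize (Hfar ta Hta). fold e0 in Hfar. lra.
    - destruct (Hgeo ep (c tb)) as [h3 Hh3].
      destruct (Hgeo (c ta) (c tb)) as [h4 Hh4].
      destruct (slim d Hm delta Hthin _ _ _ _ _ _ Hh2 Hh3 Hh4 s Hs) as [p' [[[s' [Hs' ->]]|[s' [Hs' ->]]] Hp']].
      + exfalso.
        pose proof (geo_start d Hm _ _ _ Hh3 s' Hs'). pose proof (geo_end d Hm _ _ _ Hh3 s' Hs').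
        pose proof (d_tri d Hm e0 (h2 s) (h3 s')).
        pose proof (d_tri d Hm e0 (h3 s') ep). pose proof (d_tri d Hm e0 (h3 s') (c tb)).
        rewrite (d_sym d Hm (h3 s') ep) in *. specialize (Hfar tb Htb). fold e0 in Hfar. lra.
      + destruct (near_any k ta tb ltac:(lra) Hta Htb h4 Hh4 s' Hs' e He) as [tau [Ht Hd]].
        pose proof (d_tri d Hm e0 (h2 s) (h4 s')).
        pose proof (d_tri d Hm e0 (h4 s') (c tau)).
        specialize (Hfar tau Ht). fold e0 in Hfar.
        pose proof (d_tri d Hm (c ta) em ep). pose proof (d_tri d Hm (c ta) ep (c tb)).
        rewrite (d_sym d Hm (c ta) em) in *.
        assert (HD : d (c ta) (c tb) < 2 * M + 2 * e + 2 * rr) by lra.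
        pose proof (final_alg k M e (d (c ta) (c tb)) Hk1 Hk2 Hk3 He ltac:(lra) HD).
        unfold K0. nra. }
  assert (HMB : M <= Bc).
  { apply Rle_plus_epsilon. intros e He.
    specialize (Main (e / K0) ltac:(apply Rdiv_lt_0_compat; lra)).
    replace (K0 * (e / K0)) with e in Main by (field; lra). auto. }
  intros sg Hsg eps Heps. destruct (P1 sg Hsg eps Heps) as [tau [Ht Hd]].
  exists tau. split; auto. lra.
Qed.
End Claim1.

Definition seq3 (a m b : R) : nat -> R := fun i => match i with O => a | 1%nat => m | _ => b end.
Lemma partition_seq3 a m b : a <= m -> m <= b -> partition a b (seq3 a m b) 2.
Proof. intros H1 H2. split; [|split]; simpl; auto. intros i Hi. destruct i as [|[|i]]; simpl; try lia; lra. Qed.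

Section Assembly.
Context {Y X : Type} (dY : Y -> Y -> R) (dX : X -> X -> R) (HmY : is_metric dY) (HmX : is_metric dX)
  (HgX : geodesic_space dX) (lam C delta : R) (f : Y -> X)
  (Hlam : 1 <= lam) (HC : 0 <= C) (Hd0 : 0 <= delta)
  (Hf : m_continuous dY dX f)
  (Hii : forall y y' (g : R -> Y), geodesic dY y y' g ->
     rectifiable dX (fun t => f (g t)) 0 (dY y y') /\
     path_length dX (fun t => f (g t)) 0 (dY y y') <= lam * dX (f y) (f y') + C)
  (Hthin : forall x y z gxy gxz gyz, geodesic dX x y gxy -> geodesic dX x z gxz ->
     geodesic dX y z gyz -> thin_triangle dX x y z gxy gxz gyz delta).

Lemma path_cont y y' g : geodesic dY y y' g -> forall lo hi, 0 <= lo -> hi <= dY y y' ->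
  forall s, lo <= s <= hi -> forall eps, 0 < eps -> exists eta, 0 < eta /\
  forall s', lo <= s' <= hi -> Rabs (s - s') < eta -> dX (f (g s)) (f (g s')) < eps.
Proof.
  intros Hg lo hi Hlo Hhi s Hs eps He. destruct (Hf (g s) eps He) as [eta [Heta H]].
  exists eta. split; auto. intros s' Hs' Hd. apply H.
  rewrite (geo_dist dY y y' g Hg) by lra. auto.
Qed.

Definition Bq := Bc delta lam C.

Lemma claim1_path y y' g : geodesic dY y y' g -> forall lo hi, 0 <= lo -> lo <= hi -> hi <= dY y y' ->
  forall gam, geodesic dX (f (g lo)) (f (g hi)) gam ->
  forall sig, 0 <= sig <= dX (f (g lo)) (f (g hi)) -> forall eps, 0 < eps ->
  exists tau, lo <= tau <= hi /\ dX (gam sig) (f (g tau)) <= Bq + eps.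
Proof.
  intros Hg lo hi H0 H1 H2 gam Hgam sig Hsig eps Heps.
  apply (claim1 dX HmX delta Hthin HgX Hd0 lam C Hlam HC (fun t => f (g t)) lo hi H1
     (path_cont y y' g Hg lo hi H0 H2)); auto.
  intros s r Hs Hsr Hr tau n Hp. apply (chain_ineq dY dX f lam C Hii y y' g s r tau n Hg); auto; lra.
Qed.

Definition Hc := (6 * lam ^ 2 + 14 * lam + 5) * delta + (4 * lam + 3) / (6 * lam + 2) * C.

Lemma Hc_eq : (lam + 2) * Bq + (lam / 2 + 2) * delta + C / 2 = Hc.
Proof. unfold Hc, Bq, Bc. field. lra. Qed.

Lemma slimX x y z gxy gxz gyz : geodesic dY x y gxy -> geodesic dY x z gxz -> geodesic dY y z gyz ->
  forall t, 0 <= t <= dY x y -> forall eps, 0 < eps -> exists q,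
   ((exists s, 0 <= s <= dY x z /\ q = gxz s) \/ (exists s, 0 <= s <= dY y z /\ q = gyz s)) /\
   dX (f (gxy t)) (f q) <= Hc + eps.
Proof.
  intros G1 G2 G3 t Ht eps Heps.
  set (e1 := eps / (lam + 2)).
  assert (He1 : 0 < e1) by (unfold e1; apply Rdiv_lt_0_compat; lra).
  pose proof G1 as [G10 [G11 _]]. pose proof G2 as [G20 [G21 _]]. pose proof G3 as [G30 [G31 _]].
  set (u := f x). set (v := f y). set (w := f z). set (m := f (gxy t)).
  destruct (HgX u v) as [guv Huv].
  destruct (HgX u m) as [gum Hum].
  destruct (HgX m v) as [gmv Hmv].
  destruct (HgX u w) as [guw Huw].
  destruct (HgX v w) as [gvw Hvw].
  destruct (center dX HmX delta Hthin _ _ _ _ _ _ Hum Huv Hmv) as [Cc1 Cc2].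
  set (sg := br_x dX u m v) in *. set (h := br_y dX u m v) in *.
  pose proof (d_tri dX HmX u m v). pose proof (d_tri dX HmX m u v). pose proof (d_tri dX HmX u v m).
  rewrite (d_sym dX HmX m u), (d_sym dX HmX v m) in *.
  assert (Hsh : sg + h = dX u m) by (unfold sg, h, br_x, br_y; field).
  assert (Hsg : 0 <= sg <= dX u m) by (unfold sg, h, br_x, br_y in *; lra).
  assert (Hh : 0 <= h <= dX m v) by (unfold sg, h, br_x, br_y in *; lra).
  assert (Hsg2 : 0 <= sg <= dX u v) by (unfold sg, h, br_x, br_y in *; lra).
  assert (Hum' : geodesic dX (f (gxy 0)) (f (gxy t)) gum) by (rewrite G10; auto).
  destruct (claim1_path x y gxy G1 0 t ltac:(lra) ltac:(lra) ltac:(lra) gum Hum' sg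
    ltac:(rewrite G10; auto) e1 He1) as [ta [Hta Hda]].
  assert (Hmv' : geodesic dX (f (gxy t)) (f (gxy (dY x y))) gmv) by (rewrite G11; auto).
  destruct (claim1_path x y gxy G1 t (dY x y) ltac:(lra) ltac:(lra) ltac:(lra) gmv Hmv' h
    ltac:(rewrite G11; auto) e1 He1) as [tb [Htb Hdb]].
  pose proof (chain_ineq dY dX f lam C Hii x y gxy ta tb (seq3 ta t tb) 2 G1 ltac:(lra) ltac:(lra) ltac:(lra)
     (partition_seq3 ta t tb ltac:(lra) ltac:(lra))) as HCI. simpl in HCI. fold m in HCI.
  pose proof (geo_end dX HmX _ _ _ Hum sg Hsg) as E1.
  pose proof (geo_start dX HmX _ _ _ Hmv h Hh) as E2.
  pose proof (d_tri dX HmX (gum sg) (f (gxy ta)) m).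
  pose proof (d_tri dX HmX m (f (gxy tb)) (gmv h)).
  pose proof (d_tri dX HmX (f (gxy ta)) (gum sg) (f (gxy tb))).
  pose proof (d_tri dX HmX (gum sg) (gmv h) (f (gxy tb))).
  rewrite (d_sym dX HmX (f (gxy ta)) (gum sg)) in *.
  rewrite (d_sym dX HmX (f (gxy tb)) (gmv h)) in *.
  assert (Hab : dX (f (gxy ta)) (f (gxy tb)) <= 2 * (Bq + e1) + delta) by lra.
  assert (Hlab : lam * dX (f (gxy ta)) (f (gxy tb)) <= lam * (2 * (Bq + e1) + delta))
    by (apply Rmult_le_compat_l; lra).
  assert (Hhb : 2 * h <= 2 * (Bq + e1) + lam * (2 * (Bq + e1) + delta) + C) by lra.
  destruct (slim dX HmX delta Hthin _ _ _ _ _ _ Huv Huw Hvw sg Hsg2) as [e' [[[s [Hs ->]]|[s [Hs ->]]] He']].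
  - assert (Huw' : geodesic dX (f (gxz 0)) (f (gxz (dY x z))) guw) by (rewrite G20, G21; auto).
    destruct (claim1_path x z gxz G2 0 (dY x z) ltac:(lra) ltac:(apply (d_nonneg dY HmY)) ltac:(lra)
      guw Huw' s ltac:(rewrite G20, G21; auto) e1 He1) as [tq [Htq Hdq]].
    exists (gxz tq). split. left. exists tq. split; auto; lra.
    pose proof (d_tri dX HmX m (gum sg) (guv sg)). pose proof (d_tri dX HmX m (guv sg) (guw s)).
    pose proof (d_tri dX HmX m (guw s) (f (gxz tq))).
    rewrite (d_sym dX HmX m (gum sg)) in *. fold m. rewrite <- Hc_eq.
    unfold e1 in *. replace ((lam + 2) * (eps / (lam + 2))) with eps in * by (field; lra).
    assert (Hle : dX m (f (gxz tq)) <= h + delta + delta + Bq + e1) by (unfold e1; lra).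
    unfold e1 in Hle.
    assert (Hx : h <= (lam + 1) * (Bq + eps / (lam + 2)) + lam * delta / 2 + C / 2) by nra.
    assert (Hx2 : (lam + 2) * (eps / (lam + 2)) = eps) by (field; lra).
    nra.
  - assert (Hvw' : geodesic dX (f (gyz 0)) (f (gyz (dY y z))) gvw) by (rewrite G30, G31; auto).
    destruct (claim1_path y z gyz G3 0 (dY y z) ltac:(lra) ltac:(apply (d_nonneg dY HmY)) ltac:(lra)
      gvw Hvw' s ltac:(rewrite G30, G31; auto) e1 He1) as [tq [Htq Hdq]].
    exists (gyz tq). split. right. exists tq. split; auto; lra.
    pose proof (d_tri dX HmX m (gum sg) (guv sg)). pose proof (d_tri dX HmX m (guv sg) (gvw s)).
    pose proof (d_tri dX HmX m (gvw s) (f (gyz tq))).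
    rewrite (d_sym dX HmX m (gum sg)) in *. fold m. rewrite <- Hc_eq.
    assert (Hle : dX m (f (gyz tq)) <= h + delta + delta + Bq + e1) by lra.
    unfold e1 in Hle.
    assert (Hx : h <= (lam + 1) * (Bq + eps / (lam + 2)) + lam * delta / 2 + C / 2) by (unfold e1 in Hhb; nra).
    assert (Hx2 : (lam + 2) * (eps / (lam + 2)) = eps) by (field; lra).
    nra.
Qed.

End Assembly.

Section YSide.
Context {Y : Type} (dY : Y -> Y -> R) (HmY : is_metric dY) (D0 : R) (HD0 : 0 <= D0)
  (Hslim : forall x y z gxy gxz gyz, geodesic dY x y gxy -> geodesic dY x z gxz -> geodesic dY y z gyz ->
     forall t, 0 <= t <= dY x y -> forall eps, 0 < eps -> exists q,
     ((exists s, 0 <= s <= dY x z /\ q = gxz s) \/ (exists s, 0 <= s <= dY y z /\ q = gyz s)) /\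
     dY (gxy t) q <= D0 + eps).

Lemma VL v u w g1 g2 g3 : geodesic dY v u g1 -> geodesic dY v w g2 -> geodesic dY u w g3 ->
  forall t, 0 <= t -> t <= (dY v u + dY v w - dY u w) / 2 -> dY (g1 t) (g2 t) <= 4 * D0.
Proof.
  intros G1 G2 G3 t Ht0 Ht.
  pose proof (d_tri dY HmY v w u). pose proof (d_tri dY HmY v u w).
  rewrite (d_sym dY HmY w u) in *.
  assert (Ht1 : 0 <= t <= dY v u) by lra.
  assert (Ht2 : 0 <= t <= dY v w) by lra.
  apply Rle_plus_epsilon. intros eps Heps.
  set (e := eps / 4). assert (He : 0 < e) by (unfold e; lra).
  pose proof (geo_start dY HmY _ _ _ G1 t Ht1) as A1. pose proof (geo_end dY HmY _ _ _ G1 t Ht1) as A2.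
  pose proof (geo_start dY HmY _ _ _ G2 t Ht2) as B1. pose proof (geo_end dY HmY _ _ _ G2 t Ht2) as B2.
  destruct (Hslim _ _ _ _ _ _ G1 G2 G3 t Ht1 e He) as [p1 [[[s [Hs ->]]|[s1 [Hs1 ->]]] Hp1]].
  - pose proof (geo_start dY HmY _ _ _ G2 s Hs).
    pose proof (d_tri dY HmY v (g1 t) (g2 s)).
    pose proof (d_tri dY HmY v (g2 s) (g1 t)). rewrite (d_sym dY HmY (g2 s) (g1 t)) in *.
    pose proof (d_tri dY HmY (g1 t) (g2 s) (g2 t)).
    rewrite (geo_dist dY _ _ _ G2 s t) in * by lra.
    assert (Rabs (s - t) <= D0 + e) by (apply Rabs_le; lra). unfold e in *. lra.
  - pose proof (geo_rev dY HmY _ _ _ G3) as G3r.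
    destruct (Hslim _ _ _ _ _ _ G2 G1 G3r t Ht2 e He) as [p2 [[[s [Hs ->]]|[s2 [Hs2 ->]]] Hp2]].
    + pose proof (geo_start dY HmY _ _ _ G1 s Hs).
      pose proof (d_tri dY HmY v (g2 t) (g1 s)).
      pose proof (d_tri dY HmY v (g1 s) (g2 t)). rewrite (d_sym dY HmY (g1 s) (g2 t)) in *.
      pose proof (d_tri dY HmY (g2 t) (g1 s) (g1 t)).
      rewrite (geo_dist dY _ _ _ G1 s t) in * by lra. rewrite (d_sym dY HmY (g2 t) (g1 t)) in *.
      assert (Rabs (s - t) <= D0 + e) by (apply Rabs_le; lra). unfold e in *. lra.
    + unfold grev in Hp2. rewrite (d_sym dY HmY w u) in *.
      set (q2 := dY u w - s2) in *.
      assert (Hq2 : 0 <= q2 <= dY u w) by (unfold q2; lra).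
      pose proof (geo_start dY HmY _ _ _ G3 s1 Hs1). pose proof (geo_end dY HmY _ _ _ G3 s1 Hs1).
      pose proof (geo_start dY HmY _ _ _ G3 q2 Hq2). pose proof (geo_end dY HmY _ _ _ G3 q2 Hq2).
      pose proof (d_tri dY HmY u (g1 t) (g3 s1)).
      pose proof (d_tri dY HmY v (g1 t) w). pose proof (d_tri dY HmY (g1 t) (g3 s1) w).
      pose proof (d_tri dY HmY u (g3 s1) (g1 t)).
      pose proof (d_tri dY HmY (g3 q2) (g2 t) w).
      pose proof (d_tri dY HmY v (g2 t) u). pose proof (d_tri dY HmY (g2 t) (g3 q2) u).
      pose proof (d_tri dY HmY (g2 t) (g3 q2) w).
      pose proof (d_tri dY HmY (g1 t) (g3 s1) (g2 t)). pose proof (d_tri dY HmY (g3 s1) (g3 q2) (g2 t)).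
      rewrite (geo_dist dY _ _ _ G3 s1 q2) in * by lra.
      rewrite (d_sym dY HmY (g1 t) u), (d_sym dY HmY (g3 s1) (g1 t)), (d_sym dY HmY (g2 t) u),
        (d_sym dY HmY (g3 q2) u), (d_sym dY HmY (g3 q2) (g2 t)), (d_sym dY HmY (g2 t) w) in *.
      assert (Rabs (s1 - q2) <= 2 * (D0 + e)) by (apply Rabs_le; lra). unfold e in *. lra.
Qed.

Lemma thin_all x y z gxy gxz gyz : geodesic dY x y gxy -> geodesic dY x z gxz -> geodesic dY y z gyz ->
  thin_triangle dY x y z gxy gxz gyz (4 * D0).
Proof.
  intros G1 G2 G3.
  pose proof (d_tri dY HmY x y z). pose proof (d_tri dY HmY y x z). pose proof (d_tri dY HmY x z y).
  rewrite (d_sym dY HmY y x), (d_sym dY HmY z y) in *.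
  assert (VX : forall t1 t2, t1 = t2 -> 0 <= t1 -> t1 <= br_x dY x y z -> dY (gxy t1) (gxz t2) <= 4 * D0).
  { intros t1 t2 -> Ha Hb. apply (VL x y z gxy gxz gyz G1 G2 G3); auto. }
  assert (VY : forall t1 t2, dY x y - t1 = t2 -> 0 <= t2 -> t2 <= br_y dY x y z -> dY (gxy t1) (gyz t2) <= 4 * D0).
  { intros t1 t2 E Ha Hb. pose proof (geo_rev dY HmY _ _ _ G1) as G1r.
    pose proof (VL y x z _ gyz gxz G1r G3 G2 t2 Ha) as V.
    unfold grev in V. replace (dY x y - t2) with t1 in V by lra. apply V.
    rewrite (d_sym dY HmY y x). unfold br_y in Hb. lra. }
  assert (VZ : forall t1 t2, dY x z - t1 = dY y z - t2 -> 0 <= dY x z - t1 ->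
     dY x z - t1 <= (dY x z + dY y z - dY x y) / 2 -> dY (gxz t1) (gyz t2) <= 4 * D0).
  { intros t1 t2 E Ha Hb. pose proof (geo_rev dY HmY _ _ _ G2) as G2r.
    pose proof (geo_rev dY HmY _ _ _ G3) as G3r.
    pose proof (VL z x y _ _ gxy G2r G3r G1 (dY x z - t1) Ha) as V.
    unfold grev in V. replace (dY x z - (dY x z - t1)) with t1 in V by ring.
    replace (dY y z - (dY x z - t1)) with t2 in V by lra. apply V.
    rewrite (d_sym dY HmY z x), (d_sym dY HmY z y). lra. }
  assert (Hbx : br_x dY x y z = (dY x y + dY x z - dY y z) / 2) by reflexivity.
  assert (Hby : br_y dY x y z = (dY x y + dY y z - dY x z) / 2) by reflexivity.
  intros k1 k2 t1 t2 Hk1 Hk2 Ht1 Ht2 Heq.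
  destruct k1 as [|[|[|k1]]]; try lia; destruct k2 as [|[|[|k2]]]; try lia;
  simpl in Ht1, Ht2, Heq |- *; unfold tripod_image in Heq;
  repeat match type of Heq with context [Rle_dec ?a ?b] => destruct (Rle_dec a b) end;
  unfold tripod_eq in Heq; simpl in Heq; destruct Heq as [Hs [Hf|Hf]];
  try discriminate Hf;
  first [ (assert (t1 = t2) by lra; subst t2; rewrite d_refl by auto; lra)
        | (apply VX; lra) | (rewrite d_sym by auto; apply VX; lra)
        | (apply VY; lra) | (rewrite d_sym by auto; apply VY; lra)
        | (apply VZ; lra) | (rewrite d_sym by auto; apply VZ; lra)
        | lra ].
Qed.
End YSide.

Lemma delta_nonneg {X : Type} (d : X -> X -> R) (Hm : is_metric d) delta :
  hyperbolic d delta -> forall p : X, 0 <= delta.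
Proof.
  intros [_ [Hg Ht]] p. destruct (Hg p p) as [g G].
  pose proof (Ht _ _ _ _ _ _ G G G 0%nat 0%nat 0 0 ltac:(lia) ltac:(lia)) as H.
  simpl in H. rewrite d_refl in H by auto.
  assert (H2 : d (g 0) (g 0) <= delta).
  { apply H; try lra. unfold tripod_eq. split; auto. }
  rewrite d_refl in H2 by auto. exact H2.
Qed.

Theorem mainTheorem19 (Y X : Type) (dY : Y -> Y -> R) (dX : X -> X -> R)
  (a b lam C delta : R) (f : Y -> X) :
  is_metric dY -> proper_space dY -> geodesic_space dY ->
  is_metric dX -> proper_space dX -> geodesic_space dX ->
  0 < a -> 0 <= b -> 1 <= lam -> 0 <= C ->
  m_continuous dY dX f ->
  (forall y y', dX (f y) (f y') >= a * dY y y' - b) ->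
  (forall y y' (g : R -> Y), geodesic dY y y' g ->
     rectifiable dX (fun t => f (g t)) 0 (dY y y') /\
     path_length dX (fun t => f (g t)) 0 (dY y y') <= lam * dX (f y) (f y') + C) ->
  hyperbolic dX delta ->
  let delta'' := 4 / a * ((6 * lam ^ 2 + 14 * lam + 5) * delta
                          + (4 * lam + 3) / (6 * lam + 2) * C + b) in
  hyperbolic dY delta'' /\
  delta'' <= 4 / a * ((6 * lam ^ 2 + 14 * lam + 5) * delta + C + b).
Proof.
  intros HmY HpY HgY HmX HpX HgX Ha Hb Hlam HC Hf Hi Hii Hhyp delta''.
  assert (Hcc : (4 * lam + 3) / (6 * lam + 2) * C <= C).
  { assert ((4 * lam + 3) / (6 * lam + 2) <= 1).
    { apply (Rmult_le_reg_r (6*lam+2)); [lra|]. field_simplify; lra. }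
    assert (0 <= (4 * lam + 3) / (6 * lam + 2)) by (apply Rdiv_le_0_compat; lra). nra. }
  split.
  2:{ unfold delta''. apply Rmult_le_compat_l. apply Rdiv_le_0_compat; lra. lra. }
  split; [auto|split; [auto|]].
  intros x y z gxy gxz gyz G1 G2 G3.
  pose proof (delta_nonneg dX HmX delta Hhyp (f x)) as Hd0.
  destruct Hhyp as [_ [_ Hthin]].
  set (Hcv := Hc lam C delta).
  assert (HH : 0 <= Hcv).
  { unfold Hcv, Hc. assert (0 <= (4 * lam + 3) / (6 * lam + 2)) by (apply Rdiv_le_0_compat; lra).
    assert (0 <= (6 * lam ^ 2 + 14 * lam + 5)) by nra. nra. }
  set (D0 := (Hcv + b) / a).
  assert (HD0 : 0 <= D0) by (unfold D0; apply Rdiv_le_0_compat; lra).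
  assert (E : delta'' = 4 * D0).
  { unfold delta'', D0, Hcv, Hc. field. lra. }
  rewrite E.
  apply (thin_all dY HmY D0); auto.
  intros x' y' z' g1 g2 g3 H1 H2 H3 t Ht eps Heps.
  destruct (slimX dY dX HmY HmX HgX lam C delta f Hlam HC Hd0 Hf Hii Hthin
     x' y' z' g1 g2 g3 H1 H2 H3 t Ht (eps * a) ltac:(nra)) as [q [Hq Hd]].
  exists q. split; auto. specialize (Hi (g1 t) q).
  fold Hcv in Hd.
  apply (Rmult_le_reg_l a); auto. unfold D0.
  replace (a * ((Hcv + b) / a + eps)) with (Hcv + b + eps * a) by (field; lra). lra.
Qed.
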